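(* Let $X$ be a Tychonoff space. Then $C_p(X,\mathbb R)$ is STAP if and only if $X$ is finite.
   Context: $C_p(X,\mathbb R)$ is the additive group of all continuous functions $X\to\mathbb R$ with the topology of pointwise convergence; its neutral element is the zero function. A sequence $(f_n)$ in an abelian topological group is hyper-converging if $m_nf_n\to 0$ for every integer sequence $(m_n)$. A group is STAP if no sequence of pairwise distinct elements is hyper-converging. *)

(* Defs.v *)
From Stdlib Require Import Reals List ZArith.
Open Scope R_scope.

Record TopSpace := {
  carrier :> Type;
  is_open : (carrier -> Prop) -> Prop;
  open_empty : is_open (fun _ => False);
  open_full : is_open (fun _ => True);
  open_inter : forall U V, is_open U -> is_open V -> is_open (fun x => U x /\ V x);
  open_union : forall (I : Type) (U : I -> carrier -> Prop),
      (forall i, is_open (U i)) -> is_open (fun x => exists i, U i x)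
}.

Definition R_open (U : R -> Prop) : Prop :=
  forall x, U x -> exists eps, 0 < eps /\ forall y, Rabs (y - x) < eps -> U y.

Definition continuous_to_R (X : TopSpace) (f : X -> R) : Prop :=
  forall V, R_open V -> is_open X (fun x => V (f x)).

Definition is_closed (X : TopSpace) (F : X -> Prop) : Prop :=
  is_open X (fun x => ~ F x).

Definition T1 (X : TopSpace) : Prop :=
  forall x : X, is_closed X (fun y => y = x).

Definition completely_regular (X : TopSpace) : Prop :=
  forall (F : X -> Prop) (x : X), is_closed X F -> ~ F x ->
    exists f : X -> R, continuous_to_R X f /\
      (forall y, 0 <= f y <= 1) /\ f x = 0 /\ (forall y, F y -> f y = 1).

Definition Tychonoff (X : TopSpace) : Prop := T1 X /\ completely_regular X.

Definition finite_space (X : TopSpace) : Prop :=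
  exists l : list X, forall x : X, In x l.

Definition Cp (X : TopSpace) : Type := {f : X -> R | continuous_to_R X f}.

(* Convergence to the zero function in the topology of pointwise convergence
   (the product topology on R^X restricted to C(X)) is pointwise convergence. *)
Definition cp_converges_to_zero (X : TopSpace) (g : nat -> X -> R) : Prop :=
  forall x : X, Un_cv (fun n => g n x) 0.

Definition hyper_converging (X : TopSpace) (f : nat -> Cp X) : Prop :=
  forall m : nat -> Z,
    cp_converges_to_zero X (fun n x => IZR (m n) * proj1_sig (f n) x).

Definition Cp_STAP (X : TopSpace) : Prop :=
  ~ exists f : nat -> Cp X,
      (forall i j : nat, i <> j -> f i <> f j) /\ hyper_converging X f.

(* Main.v *)
Require Import Defs.
From Stdlib Require Import Reals List ZArith.
From Stdlib Require Import Lra Lia Classical ClassicalEpsilon FunctionalExtensionality PropExtensionality ProofIrrelevance.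
Open Scope R_scope.

Lemma open_ext (X : TopSpace) (U V : X -> Prop) :
  is_open X U -> (forall x, U x <-> V x) -> is_open X V.
Proof.
  intros H E. replace V with U; auto. extensionality x.
  apply propositional_extensionality. auto.
Qed.

Definition loc_cont (X : TopSpace) (f : X -> R) :=
  forall x eps, 0 < eps -> exists U, is_open X U /\ U x /\
    forall y, U y -> Rabs (f y - f x) < eps.

Lemma cont_loc X f : continuous_to_R X f -> loc_cont X f.
Proof.
  intros Hf x eps He.
  exists (fun y => Rabs (f y - f x) < eps). split; [|split].
  - apply (Hf (fun r => Rabs (r - f x) < eps)).
    intros r Hr. exists (eps - Rabs (r - f x)). split; [lra|].
    intros y Hy. pose proof (Rabs_triang (y - r) (r - f x)) as H.
    replace (y - r + (r - f x)) with (y - f x) in H by ring. lra.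
  - simpl. replace (f x - f x) with 0 by ring. rewrite Rabs_R0. lra.
  - auto.
Qed.

Lemma loc_cont_ X f : loc_cont X f -> continuous_to_R X f.
Proof.
  intros Hf V HV.
  assert (H : forall i : {x : X | V (f x)}, exists U : X -> Prop,
             is_open X U /\ U (proj1_sig i) /\ forall y, U y -> V (f y)).
  { intros [x Hx]. simpl. destruct (HV _ Hx) as [e [He He']].
    destruct (Hf x e He) as [U [HU1 [HU2 HU3]]]. exists U. repeat split; auto. }
  set (Uf := fun i => proj1_sig (constructive_indefinite_description _ (H i))).
  apply open_ext with (U := fun x => exists i, Uf i x).
  - apply open_union. intros i. unfold Uf.
    destruct (constructive_indefinite_description _ (H i)) as [U [? ?]]. simpl. auto.
  - intros x; split.
    + intros [i Hi]. unfold Uf in Hi.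
      destruct (constructive_indefinite_description _ (H i)) as [U [? [? ?]]]. simpl in Hi. auto.
    + intros Hx. exists (exist _ x Hx). unfold Uf.
      destruct (constructive_indefinite_description _ _) as [U [? [? ?]]]. simpl in *. auto.
Qed.

Lemma loc_comb X f g (h : R -> R -> R) :
  (forall a b c d, Rabs (h a b - h c d) <= Rabs (a - c) + Rabs (b - d)) ->
  loc_cont X f -> loc_cont X g -> loc_cont X (fun x => h (f x) (g x)).
Proof.
  intros Hh Hf Hg x eps He.
  destruct (Hf x (eps/2)) as [U [U1 [U2 U3]]]; [lra|].
  destruct (Hg x (eps/2)) as [V [V1 [V2 V3]]]; [lra|].
  exists (fun y => U y /\ V y). split; [apply open_inter; auto| split; [auto|]].
  intros y [Uy Vy]. specialize (Hh (f y) (g y) (f x) (g x)).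
  specialize (U3 y Uy). specialize (V3 y Vy). lra.
Qed.

Lemma loc_const X k : loc_cont X (fun _ => k).
Proof.
  intros x eps He. exists (fun _ => True). split; [apply open_full|split; auto].
  intros. replace (k - k) with 0 by ring. rewrite Rabs_R0; lra.
Qed.

Lemma ineq_min a b c d : Rabs (Rmin a b - Rmin c d) <= Rabs (a - c) + Rabs (b - d).
Proof. unfold Rmin. destruct (Rle_dec a b), (Rle_dec c d); unfold Rabs; repeat destruct Rcase_abs; lra. Qed.
Lemma ineq_max a b c d : Rabs (Rmax a b - Rmax c d) <= Rabs (a - c) + Rabs (b - d).
Proof. unfold Rmax. destruct (Rle_dec a b), (Rle_dec c d); unfold Rabs; repeat destruct Rcase_abs; lra. Qed.
Lemma ineq_sub a b c d : Rabs ((a - b) - (c - d)) <= Rabs (a - c) + Rabs (b - d).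
Proof. unfold Rabs; repeat destruct Rcase_abs; lra. Qed.

Lemma loc_min X f g : loc_cont X f -> loc_cont X g -> loc_cont X (fun x => Rmin (f x) (g x)).
Proof. apply (loc_comb X f g Rmin ineq_min). Qed.
Lemma loc_max X f g : loc_cont X f -> loc_cont X g -> loc_cont X (fun x => Rmax (f x) (g x)).
Proof. apply (loc_comb X f g Rmax ineq_max). Qed.
Lemma loc_sub X f g : loc_cont X f -> loc_cont X g -> loc_cont X (fun x => f x - g x).
Proof. apply (loc_comb X f g Rminus ineq_sub). Qed.

Definition ind (X : TopSpace) (A : X -> Prop) (u v : R) : X -> R :=
  fun x => if excluded_middle_informative (A x) then u else v.

Lemma ind_cont X A u v : is_open X A -> is_open X (fun x => ~ A x) ->
  continuous_to_R X (ind X A u v).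
Proof.
  intros H1 H2 V _. unfold ind.
  destruct (classic (V u)) as [Hu|Hu]; destruct (classic (V v)) as [Hv|Hv].
  - apply open_ext with (fun _ => True); [apply open_full|].
    intros x; destruct excluded_middle_informative; tauto.
  - apply open_ext with A; auto. intros x; destruct excluded_middle_informative; tauto.
  - apply open_ext with (fun x => ~ A x); auto. intros x; destruct excluded_middle_informative; tauto.
  - apply open_ext with (fun _ => False); [apply open_empty|].
    intros x; destruct excluded_middle_informative; tauto.
Qed.

Definition fin (X : TopSpace) (S : X -> Prop) := exists l : list X, forall x, S x -> In x l.

Definition Good (X : TopSpace) (w : X -> R) :=
  loc_cont X w /\ (forall x, 0 <= w x) /\ ~ fin X (fun x => 0 < w x).

Definition StepP (X : TopSpace) (w : X -> R) (p : (X -> R) * (X -> R)) :=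
  Good X (snd p) /\ loc_cont X (fst p) /\ (exists y, fst p y <> 0) /\
  (forall x, fst p x <> 0 -> 0 < w x) /\ (forall x, 0 < snd p x -> 0 < w x) /\
  (forall x, fst p x <> 0 -> 0 < snd p x -> False).

Lemma min_pos a b : 0 < Rmin a b <-> 0 < a /\ 0 < b.
Proof. unfold Rmin; destruct Rle_dec; split; intros; lra. Qed.
Lemma max0_pos t : 0 < Rmax 0 t <-> 0 < t.
Proof. unfold Rmax; destruct Rle_dec; split; intros; lra. Qed.
Lemma nonneg_min a b : 0 <= a -> 0 <= b -> 0 <= Rmin a b.
Proof. unfold Rmin; destruct Rle_dec; lra. Qed.
Lemma max0_nonneg t : 0 <= Rmax 0 t.
Proof. unfold Rmax; destruct Rle_dec; lra. Qed.

Lemma Ropen_pos : R_open (fun r => 0 < r).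
Proof.
  intros r Hr; exists r; split; auto; intros y Hy; unfold Rabs in Hy;
  destruct Rcase_abs; lra.
Qed.

Lemma avoid_open X (hT : T1 X) a l :
  is_open X (fun x => forall p, In p l -> p <> a -> x <> p).
Proof.
  induction l as [|p0 l IH].
  - apply open_ext with (fun _ => True); [apply open_full|].
    intros x; split; auto; intros _ p Hp; destruct Hp.
  - apply open_ext with (fun x => (p0 <> a -> x <> p0) /\
                                  forall p, In p l -> p <> a -> x <> p).
    + apply open_inter; auto.
      destruct (classic (p0 = a)) as [E|E].
      * apply open_ext with (fun _ => True); [apply open_full|].
        intros x; split; auto; intros _ N; contradiction.
      * apply open_ext with (fun x => ~ x = p0); [apply hT|].
        intros x; split; auto.
    + intros x; split.
      * intros [H1 H2] p [<-|Hp]; auto.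
      * intros H. split; [apply H; left; auto|]. intros p Hp. apply H. right; auto.
Qed.

Lemma step X (hX : Tychonoff X) w : Good X w -> exists p, StepP X w p.
Proof.
  intros [Hwc [Hw0 Hwi]]. destruct hX as [HT1 HCR].
  assert (Ha : exists a, 0 < w a).
  { apply NNPP; intro N. apply Hwi. exists nil. intros x Hx. apply N. eauto. }
  destruct Ha as [a Ha].
  assert (Hb : exists b, 0 < w b /\ b <> a).
  { apply NNPP; intro N. apply Hwi. exists (a :: nil). intros x Hx. left.
    apply NNPP. intro N2. apply N. exists x. split; auto. }
  destruct Hb as [b [Hb Hba]].
  destruct (HCR (fun y => y = b) a (HT1 b)) as [phi [Hpc [Hp01 [Hpa Hpb]]]].
  { intro E. apply Hba. auto. }
  pose proof (Hpb b eq_refl) as Hpb1.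
  apply cont_loc in Hpc.
  destruct (classic (fin X (fun x => 0 < w x /\ phi x < 1/2))) as [[l Hl]|Hinf].
  - assert (HPo : is_open X (fun x => 0 < w x /\ phi x < 1/2)).
    { apply open_ext with (fun x => (fun r => 0 < r) (Rmin (w x) (1/2 - phi x))).
      - apply (loc_cont_ X (fun x => Rmin (w x) (1/2 - phi x))).
        + apply loc_min; auto. apply (loc_sub X (fun _ => 1/2) phi); auto. apply loc_const.
        + apply Ropen_pos.
      - intros x. simpl. rewrite min_pos. split; intros [? ?]; split; lra. }
    assert (Hao : is_open X (fun x => x = a)).
    { apply open_ext with (fun x => (0 < w x /\ phi x < 1/2) /\
                                   forall p, In p l -> p <> a -> x <> p).
      - apply open_inter; auto. apply avoid_open; auto.
      - intros x; split.
        + intros [HP Hav]. apply NNPP; intro Hxa.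
          exact (Hav x (Hl x HP) (fun e => Hxa e) eq_refl).
        + intros ->. split; [split; [auto|rewrite Hpa; lra]|].
          intros p _ Hp E. apply Hp. symmetry; auto. }
    assert (Hac : is_open X (fun x => ~ x = a)) by apply (HT1 a).
    exists (ind X (fun x => x = a) 1 0,
            fun x => Rmin (w x) (ind X (fun x => x = a) 0 1 x)).
    unfold StepP; simpl. repeat split.
    + apply loc_min; auto. apply cont_loc, ind_cont; auto.
    + intros x. apply nonneg_min; auto. unfold ind; destruct excluded_middle_informative; lra.
    + intros [l' Hl']. apply Hwi. exists (a :: l'). intros x Hx.
      destruct (classic (x = a)) as [->|Hn]; [left; auto|].
      right; apply Hl'. apply min_pos; split; auto.
      unfold ind; destruct excluded_middle_informative; [contradiction|lra].
    + apply cont_loc, ind_cont; auto.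
    + exists a. unfold ind; destruct excluded_middle_informative; [lra|tauto].
    + intros x. unfold ind; destruct excluded_middle_informative; [intros; subst; auto|lra].
    + intros x Hx. apply min_pos in Hx. tauto.
    + intros x Hc Hw'. unfold ind in *.
      destruct (excluded_middle_informative (x = a)).
      * apply min_pos in Hw'. lra.
      * lra.
  - exists (fun x => Rmin (w x) (Rmax 0 (phi x - 1/2)),
            fun x => Rmin (w x) (Rmax 0 (1/2 - phi x))).
    unfold StepP; simpl. repeat split.
    + apply loc_min; auto. apply (loc_max X (fun _ => 0)); [apply loc_const|].
      apply (loc_sub X (fun _ => 1/2) phi); auto. apply loc_const.
    + intros x. apply nonneg_min; auto. apply max0_nonneg.
    + intros [l Hl]. apply Hinf. exists l. intros x [H1 H2]. apply Hl.
      apply min_pos; split; auto. apply max0_pos; lra.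
    + apply loc_min; auto. apply (loc_max X (fun _ => 0)); [apply loc_const|].
      apply (loc_sub X phi (fun _ => 1/2)); auto. apply loc_const.
    + exists b. intro E.
      assert (0 < Rmin (w b) (Rmax 0 (phi b - 1/2))); [|lra].
      apply min_pos; split; auto. apply max0_pos; lra.
    + intros x Hx. assert (0 < Rmin (w x) (Rmax 0 (phi x - 1/2))).
      { pose proof (nonneg_min (w x) _ (Hw0 x) (max0_nonneg (phi x - 1/2))). lra. }
      apply min_pos in H. tauto.
    + intros x Hx. apply min_pos in Hx. tauto.
    + intros x Hc Hw'.
      assert (0 < Rmin (w x) (Rmax 0 (phi x - 1/2))).
      { pose proof (nonneg_min (w x) _ (Hw0 x) (max0_nonneg (phi x - 1/2))). cbn beta in *; lra. }
      apply min_pos in H. apply min_pos in Hw'.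
      destruct H as [_ H]; destruct Hw' as [_ H']. rewrite max0_pos in H. rewrite max0_pos in H'. lra.
Qed.

Lemma step_ex X (hX : Tychonoff X) w : exists p, Good X w -> StepP X w p.
Proof.
  destruct (classic (Good X w)) as [G|G].
  - destruct (step X hX w G) as [p Hp]. exists p; auto.
  - exists (w, w). intro; contradiction.
Qed.

Definition nextp (X : TopSpace) (hX : Tychonoff X) (w : X -> R) := proj1_sig (constructive_indefinite_description _ (step_ex X hX w)).

Lemma nextp_spec X hX w : Good X w -> StepP X w (nextp X hX w).
Proof.
  unfold nextp. destruct (constructive_indefinite_description _ _). simpl. auto.
Qed.

Fixpoint Wseq (X : TopSpace) (hX : Tychonoff X) (n : nat) : X -> R :=
  match n with
  | O => fun _ => 1
  | S k => snd (nextp X hX (Wseq X hX k))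
  end.

Definition Cseq X hX n := fst (nextp X hX (Wseq X hX n)).

Lemma Wgood X hX : ~ finite_space X -> forall n, Good X (Wseq X hX n).
Proof.
  intros Hinf n. induction n as [|n IH].
  - simpl. split; [apply loc_const|split; [intros; lra|]].
    intros [l Hl]. apply Hinf. exists l. intros x. apply Hl. lra.
  - simpl. apply (nextp_spec X hX _ IH).
Qed.

Lemma Wmono X hX : ~ finite_space X -> forall k d x, 0 < Wseq X hX (k + d) x -> 0 < Wseq X hX k x.
Proof.
  intros Hinf k d x. induction d as [|d IH].
  - rewrite Nat.add_0_r. auto.
  - rewrite Nat.add_succ_r. intros H. apply IH.
    destruct (nextp_spec X hX _ (Wgood X hX Hinf (k + d))) as [_ [_ [_ [_ [H5 _]]]]].
    apply H5. exact H.
Qed.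

Lemma Cdisj X hX : ~ finite_space X -> forall i j x, (i < j)%nat ->
  Cseq X hX i x <> 0 -> Cseq X hX j x <> 0 -> False.
Proof.
  intros Hinf i j x Hij Hi Hj.
  destruct (nextp_spec X hX _ (Wgood X hX Hinf j)) as [_ [_ [_ [H4 _]]]].
  pose proof (H4 x Hj) as Wj.
  replace j with (S i + (j - S i))%nat in Wj by lia.
  apply Wmono in Wj; auto.
  destruct (nextp_spec X hX _ (Wgood X hX Hinf i)) as [_ [_ [_ [_ [_ H6]]]]].
  exact (H6 x Hi Wj).
Qed.

Lemma cp_eq X (a b : Cp X) : proj1_sig a = proj1_sig b -> a = b.
Proof.
  destruct a as [fa pa], b as [fb pb]. simpl. intros ->. f_equal. apply proof_irrelevance.
Qed.

Lemma arch_nat r : exists n : nat, r < INR n.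
Proof.
  destruct (archimed (Rabs r)) as [H _].
  assert (Hr : r <= Rabs r) by apply RRle_abs.
  assert (Hp : (0 <= up (Rabs r))%Z).
  { apply le_IZR. pose proof (Rabs_pos r). lra. }
  exists (Z.to_nat (up (Rabs r))). rewrite INR_IZR_INZ, Z2Nat.id; auto. lra.
Qed.

Lemma mult_exists X (g : X -> R) (l : list X) : exists m : nat, forall m', (m <= m')%nat ->
  forall x, In x l -> g x <> 0 -> 1 <= INR m' * Rabs (g x).
Proof.
  induction l as [|p l [m1 H1]].
  - exists 0%nat. intros m' _ x Hx. destruct Hx.
  - destruct (classic (g p = 0)) as [E|E].
    + exists m1. intros m' Hm x [<-|Hx] Hg; [contradiction| apply H1; auto].
    + destruct (arch_nat (/ Rabs (g p))) as [m2 Hm2].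
      exists (max m1 m2). intros m' Hm x [<-|Hx] Hg.
      * assert (Ha : 0 < Rabs (g p)) by (apply Rabs_pos_lt; auto).
        assert (H2 : 1 < INR m2 * Rabs (g p)).
        { replace 1 with (/ Rabs (g p) * Rabs (g p)) by (field; lra).
          apply Rmult_lt_compat_r; auto. }
        assert (INR m2 <= INR m') by (apply le_INR; lia). nra.
      * apply H1; auto; lia.
Qed.

Theorem theorem6p4 (X : TopSpace) (hX : Tychonoff X) :
  Cp_STAP X <-> finite_space X.
Proof.
  split.
  - intros HS. apply NNPP; intro Hinf. apply HS.
    assert (Hc : forall n, continuous_to_R X (Cseq X hX n)).
    { intros n. apply loc_cont_.
      destruct (nextp_spec X hX _ (Wgood X hX Hinf n)) as [_ [H2 _]]. exact H2. }
    exists (fun n => exist _ (Cseq X hX n) (Hc n)). split.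
    + intros i j Hij E. apply (f_equal (@proj1_sig _ _)) in E. simpl in E.
      assert (Hsym : forall i j, (i < j)%nat -> Cseq X hX i = Cseq X hX j -> False).
      { intros i' j' Hlt E'.
        destruct (nextp_spec X hX _ (Wgood X hX Hinf i')) as [_ [_ [[y Hy] _]]].
        apply (Cdisj X hX Hinf i' j' y Hlt Hy). fold (Cseq X hX i') in Hy.
        rewrite <- E'. exact Hy. }
      destruct (Nat.lt_total i j) as [H|[H|H]]; [eauto|contradiction|eauto].
    + intros m x. simpl.
      destruct (classic (exists k, Cseq X hX k x <> 0)) as [[k Hk]|Hn].
      * intros eps He. exists (S k). intros n Hn.
        assert (Z : Cseq X hX n x = 0).
        { apply NNPP; intro N. apply (Cdisj X hX Hinf k n x); auto; lia. }
        unfold R_dist. rewrite Z. replace (IZR (m n) * 0 - 0) with 0 by ring.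
        rewrite Rabs_R0; lra.
      * intros eps He. exists 0%nat. intros n Hn'.
        assert (Z : Cseq X hX n x = 0).
        { apply NNPP; intro N. apply Hn. eauto. }
        unfold R_dist. rewrite Z. replace (IZR (m n) * 0 - 0) with 0 by ring.
        rewrite Rabs_R0; lra.
  - intros [l Hl] [f [Hd Hh]].
    set (M := fun n => proj1_sig (constructive_indefinite_description _
                  (mult_exists X (proj1_sig (f n)) l))).
    assert (HM : forall n x, In x l -> proj1_sig (f n) x <> 0 ->
                 1 <= INR (M n) * Rabs (proj1_sig (f n) x)).
    { intros n. unfold M.
      destruct (constructive_indefinite_description _ _) as [k Hk]. simpl.
      apply Hk. lia. }
    specialize (Hh (fun n => Z.of_nat (M n))).
    assert (HN : forall l0, exists N, forall x, In x l0 -> forall n, (N <= n)%nat ->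
                   proj1_sig (f n) x = 0).
    { induction l0 as [|p l0 [N2 IH]].
      - exists 0%nat. intros x Hx. destruct Hx.
      - destruct (Hh p 1 Rlt_0_1) as [N1 HN1].
        exists (max N1 N2). intros x [<-|Hx] n Hn.
        + apply NNPP; intro N. specialize (HN1 n ltac:(lia)). simpl in HN1.
          specialize (HM n p (Hl p) N).
          unfold R_dist in HN1. rewrite Rminus_0_r, Rabs_mult, <- INR_IZR_INZ,
            (Rabs_pos_eq (INR (M n))) in HN1 by apply pos_INR. lra.
        + apply IH; auto; lia. }
    destruct (HN l) as [N HNl].
    apply (Hd N (S N)); [lia|].
    apply cp_eq. extensionality x. rewrite (HNl x (Hl x) N), (HNl x (Hl x) (S N)); auto.
Qed.
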